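(* Let $T$ be any shortest-path tree of $G$ rooted at $s$, let $R$ be the forest obtained from $T$ by deleting the edges in $E(T)\cap E(D)$ (so $V(R)=V$), and let $\widetilde{E}$ be the set of edges $\{x,y\}\in E\setminus(E(T)\cup E(D))$ such that $x$ and $y$ lie in different connected components (subtrees) of $R$. Then an optimal outward path contains an edge of $\widetilde{E}$.
   Context: $G=(V,E,w)$ is a simple, connected, undirected graph with positive edge lengths, $s,t\in V$. A path is always simple; an $st$-path is a simple path from $s$ to $t$, and its length is the sum of its edge lengths. $D$ is the subgraph formed by the union of all shortest $st$-paths of $G$. An optimal outward path is an $st$-path of minimum length among all $st$-paths containing at least one edge of $E\setminus E(D)$. *)

(* Defs.v *)
(* A finite simple undirected weighted graph G on vertex type V
   is given by a symmetric irreflexive relation g : rel V and edge lengths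
   w : V -> V -> R (symmetric, positive on edges).  An (undirected) edge {x,y}
   is represented by the two-element set [set x; y] : {set V}. *)
From HB Require Import structures.
From mathcomp Require Import all_boot all_order all_algebra.
Set Implicit Arguments. Unset Strict Implicit. Unset Printing Implicit Defensive.
Import Order.TTheory GRing.Theory Num.Theory.
Local Open Scope ring_scope.

Section Defs.
Variables (R : realDomainType) (V : finType) (g : rel V) (w : V -> V -> R).

Definition is_edge (e : {set V}) : Prop := exists x y, g x y /\ e = [set x; y].

(* simple path in G from a to b, given as the vertex list a :: p *)
Definition spath (a b : V) (p : seq V) : bool :=
  [&& path g a p, last a p == b & uniq (a :: p)].

Definition pedges (a : V) (p : seq V) : seq {set V} :=
  [seq [set e.1; e.2] | e <- zip (a :: p) p].

Definition plen (a : V) (p : seq V) : R :=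
  \sum_(e <- zip (a :: p) p) w e.1 e.2.

Definition shortest_path (a b : V) (p : seq V) : Prop :=
  spath a b p /\ forall q, spath a b q -> plen a p <= plen a q.

Definition connected_graph : Prop := forall u v, exists p, spath u v p.

Variables (s t : V).

(* e is an edge of D, the union of all shortest st-paths *)
Definition inD (e : {set V}) : Prop :=
  exists p, shortest_path s t p /\ e \in pedges s p.

Definition outward_path (p : seq V) : Prop :=
  spath s t p /\ exists e, e \in pedges s p /\ ~ inD e.

Definition optimal_outward_path (p : seq V) : Prop :=
  outward_path p /\ forall q, outward_path q -> plen s p <= plen s q.

Definition subpath (F : {set V} -> Prop) (a b : V) (p : seq V) : Prop :=
  spath a b p /\ forall e, e \in pedges a p -> F e.

Definition has_cycle (F : {set V} -> Prop) : Prop :=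
  exists x p, [/\ path g x p, uniq (x :: p), (2 <= size p)%N,
                 (forall e, e \in pedges x p -> F e) & F [set last x p; x]].

Definition spanning_tree (T : {set {set V}}) : Prop :=
  [/\ forall e, e \in T -> is_edge e,
      forall u v, exists p, subpath (fun e => e \in T) u v p
    & ~ has_cycle (fun e => e \in T)].

Definition sp_tree (T : {set {set V}}) : Prop :=
  spanning_tree T /\
  forall v p, subpath (fun e => e \in T) s v p -> shortest_path s v p.

Definition forestR (T : {set {set V}}) (e : {set V}) : Prop :=
  e \in T /\ ~ inD e.

Definition R_connected (T : {set {set V}}) (x y : V) : Prop :=
  exists p, subpath (forestR T) x y p.

Definition Etilde (T : {set {set V}}) (e : {set V}) : Prop :=
  exists x y, [/\ g x y, e = [set x; y], e \notin T, ~ inD e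
                & ~ R_connected T x y].

End Defs.

(* Main.v *)
Require Import Defs.
From HB Require Import structures.
From mathcomp Require Import all_boot all_order all_algebra.
From mathcomp Require Import lra zify.
From Stdlib Require Import Classical.
Set Implicit Arguments. Unset Strict Implicit. Unset Printing Implicit Defensive.
Import Order.TTheory GRing.Theory Num.Theory.
Local Open Scope ring_scope.

Section Work.
Variables (R : realDomainType) (V : finType) (g : rel V) (w : V -> V -> R).
Implicit Types (a x u v : V) (p q : seq V).
Hypothesis gsym : symmetric g.
Hypothesis girr : irreflexive g.
Hypothesis wsym : forall x y, w x y = w y x.
Hypothesis wpos : forall x y, g x y -> 0 < w x y.

Lemma pedges_cons a x p : pedges a (x :: p) = [set a; x] :: pedges x p.
Proof. by []. Qed.

Lemma pedges_nil a : pedges a [::] = [::].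
Proof. by []. Qed.

Lemma plen_cons a x p : plen w a (x :: p) = w a x + plen w x p.
Proof. by rewrite /plen /= big_cons. Qed.

Lemma plen_nil a : plen w a [::] = 0.
Proof. by rewrite /plen /= big_nil. Qed.

Lemma pedges_cat a p1 p2 :
  pedges a (p1 ++ p2) = pedges a p1 ++ pedges (last a p1) p2.
Proof. by elim: p1 a => [|x p1 IH] a //=; rewrite !pedges_cons IH. Qed.

Lemma plen_cat a p1 p2 :
  plen w a (p1 ++ p2) = plen w a p1 + plen w (last a p1) p2.
Proof.
elim: p1 a => [|x p1 IH] a /=; first by rewrite plen_nil add0r.
by rewrite !plen_cons IH addrA.
Qed.

Lemma plen_ge0 a p : path g a p -> 0 <= plen w a p.
Proof.
elim: p a => [|x p IH] a /=; first by rewrite plen_nil.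
move=> /andP[gax pp]; rewrite plen_cons.
have := wpos gax; have := IH _ pp; lra.
Qed.

Lemma plen_gt0 a p : path g a p -> p != [::] -> 0 < plen w a p.
Proof.
case: p => [|x p] //= /andP[gax pp] _; rewrite plen_cons.
have := wpos gax; have := plen_ge0 pp; lra.
Qed.

Lemma mem_zip_l (T1 T2 : eqType) (l1 : seq T1) (l2 : seq T2) (u : T1) (v : T2) :
  (u, v) \in zip l1 l2 -> u \in l1 /\ v \in l2.
Proof.
elim: l1 l2 => [|x l1 IH] [|y l2] //=.
rewrite in_cons => /orP[/eqP [-> ->]|/IH [h1 h2]].
  by split; apply: mem_head.
by split; rewrite ?in_cons ?h1 ?h2 orbT.
Qed.

Lemma path_zip a p u v : path g a p -> (u, v) \in zip (a :: p) p -> g u v.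
Proof.
elim: p a => [|x p IH] a //= /andP[gax pp].
rewrite in_cons => /orP[/eqP [-> ->] //|]; exact: IH.
Qed.

Lemma pedgesP a p e : e \in pedges a p ->
  exists u v, [/\ (u, v) \in zip (a :: p) p, e = [set u; v] & u \in a :: p /\ v \in p].
Proof.
move=> /mapP [[u v] uv ->]; exists u, v; split => //; exact: mem_zip_l uv.
Qed.

Lemma pedges_mem a p u v : (u, v) \in zip (a :: p) p -> [set u; v] \in pedges a p.
Proof. by move=> h; apply/mapP; exists (u, v). Qed.

Lemma shorten_walk n a p : (size p <= n)%N -> path g a p ->
  exists q, [/\ spath g a (last a p) q, plen w a q <= plen w a p,
     {subset pedges a q <= pedges a p} & {subset q <= p}].
Proof.
elim: n a p => [|n IH] a p.
  rewrite leqn0 => /nilP -> _; exists [::]; split => //.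
  by rewrite /spath /= eqxx.
move=> sp pp; case: (boolP (a \in p)) => ap.
  case/splitPr: ap pp sp => p1 p2.
  rewrite cat_path /= => /andP[pp1 /andP[ga pp2]].
  rewrite size_cat /= => sz.
  have [|q [sq lq eq sub]] := IH a p2 _ pp2; first by lia.
  exists q; split.
  - by rewrite last_cat /=.
  - rewrite plen_cat plen_cons.
    have := plen_ge0 pp1; have := wpos ga; lra.
  - move=> e /eq he; rewrite pedges_cat pedges_cons mem_cat in_cons he.
    by rewrite !orbT.
  - by move=> y /sub hy; rewrite mem_cat in_cons hy !orbT.
case: p ap pp sp => [|x p] ap.
  move=> _ _; exists [::]; split => //; by rewrite /spath /= eqxx.
move=> /= /andP[gax pp] sp.
have [|q [sq lq eq sub]] := IH x p _ pp; first by lia.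
exists (x :: q); split.
- move: sq; rewrite /spath /= gax => /and3P[-> -> uq] /=.
  rewrite uq andbT; apply/negP => /orP[/eqP ax|/sub aq].
    by move: ap; rewrite ax mem_head.
  by move: ap; rewrite in_cons aq orbT.
- by rewrite !plen_cons; move: lq; lra.
- by move=> e; rewrite !pedges_cons !in_cons => /orP[->//|/eq ->]; rewrite orbT.
- by move=> y; rewrite !in_cons => /orP[->//|/sub ->]; rewrite orbT.
Qed.

Lemma pref a z A : z \in a :: A -> exists A1 A2, A = A1 ++ A2 /\ last a A1 = z.
Proof.
rewrite in_cons => /orP[/eqP ->|/splitPr [A1 A2]]; first by exists [::], A.
by exists (rcons A1 z), A2; rewrite cat_rcons last_rcons.
Qed.

Lemma pedges_rcons a p x : pedges a (rcons p x) = rcons (pedges a p) [set last a p; x].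
Proof. by rewrite -cats1 pedges_cat pedges_cons pedges_nil cats1. Qed.

Lemma rev_walk x q : path g x q ->
  exists q', [/\ path g (last x q) q', last (last x q) q' = x,
    last x q :: q' = rev (x :: q) & {subset pedges (last x q) q' <= pedges x q}].
Proof.
elim: q x => [|v q IH] x /=; first by move=> _; exists [::].
move=> /andP[gxv pp]; have [q1 [pq1 lq1 rq1 eq1]] := IH v pp.
exists (rcons q1 x); split.
- by rewrite rcons_path pq1 lq1 gsym.
- by rewrite last_rcons.
- by rewrite rev_cons -rq1.
- move=> e; rewrite pedges_rcons mem_rcons in_cons lq1 pedges_cons in_cons.
  move=> /orP[/eqP ->|/eq1 ->]; last by rewrite orbT.
  by rewrite setUC eqxx.
Qed.

Fixpoint allseqs (n : nat) : seq (seq V) :=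
  if n is n'.+1 then [::] :: [seq x :: l | x <- enum V, l <- allseqs n'] else [:: [::]].

Lemma allseqsP n (l : seq V) : (size l <= n)%N -> l \in allseqs n.
Proof.
elim: n l => [|n IH] [|x l] //=.
rewrite ltnS => /IH h; rewrite in_cons; apply/orP; right.
by apply: (allpairs_f (fun x l => x :: l)) => //; rewrite mem_enum.
Qed.

Lemma list_min (L : seq (seq V)) (f : seq V -> R) : L != [::] ->
  exists2 m, m \in L & forall l, l \in L -> f m <= f l.
Proof.
elim: L => [|a L IH] // _.
case: (eqVneq L [::]) => [->|/IH [m mL hm]].
  by exists a; rewrite ?mem_head // => l; rewrite in_cons in_nil orbF => /eqP ->.
case: (leP (f a) (f m)) => h.
  exists a; first by rewrite mem_head.
  move=> l; rewrite in_cons => /orP[/eqP ->//|/hm]; apply: le_trans.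
  exact: h.
exists m; first by rewrite in_cons mL orbT.
by move=> l; rewrite in_cons => /orP[/eqP ->|/hm//]; apply: ltW.
Qed.

Lemma exists_shortest a b q : spath g a b q -> exists p0, shortest_path g w a b p0.
Proof.
move=> sq.
have szP l : spath g a b l -> (size l <= #|V|)%N.
  move=> /and3P[_ _ ul].
  have sub : {subset a :: l <= enum V} by move=> y _; rewrite mem_enum.
  by have := uniq_leq_size ul sub; rewrite cardE /= => /ltnW.
set L := [seq l <- allseqs #|V| | spath g a b l].
have qL : q \in L by rewrite mem_filter sq allseqsP // szP.
have [|m mL hm] := @list_min L (plen w a).
  by apply/eqP => E; rewrite E in qL.
exists m; split; first by move: mL; rewrite mem_filter => /andP[].
by move=> l sl; apply: hm; rewrite mem_filter sl allseqsP // szP.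
Qed.

Variables (s t : V) (T : {set {set V}}).
Hypothesis HT : sp_tree g w s T.

Definition VD v := exists p0, shortest_path g w s t p0 /\ v \in s :: p0.

Lemma ext W y p0 : shortest_path g w s y W -> shortest_path g w s t p0 ->
  y \in s :: p0 -> forall e, e \in pedges s W -> inD g w s t e.
Proof.
move=> [sW mW] [sp0 mp0] /pref [p1 [p2 [Ep0 ly]]] e eW.
move: sW => /and3P[pW /eqP lW uW].
move: sp0; rewrite /spath Ep0 cat_path last_cat ly => /and3P[/andP[pp1 pp2] /eqP lp2 up].
move: (up); rewrite -cat_cons cat_uniq => /and3P[up1 hp up2].
have yp1 : y \in s :: p1 by rewrite -ly mem_last.
have sp1 : spath g s y p1 by rewrite /spath pp1 ly eqxx up1.
have lenW := mW _ sp1.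
have disj : forall u, u \in s :: W -> u \in p2 -> False.
  move=> u uW' up2'.
  have uy : u != y.
    apply/eqP => E; move: hp => /hasPn /(_ u up2'); rewrite E yp1. by [].
  have [W1 [W2 [EW lW1]]] := pref uW'.
  have uyp2 : u \in y :: p2 by rewrite in_cons up2' orbT.
  have [p21 [p22 [Ep2 lp21]]] := pref uyp2.
  have W2n : W2 != [::].
    apply/eqP => E; move: lW; rewrite EW E cats0 lW1 => E2; by rewrite E2 eqxx in uy.
  move: pW; rewrite EW cat_path lW1 => /andP[pW1 pW2].
  move: pp2; rewrite Ep2 cat_path lp21 => /andP[pp21 pp22].
  have pk : path g s (W1 ++ p22) by rewrite cat_path pW1 lW1.
  have [q [sq lq _ _]] := shorten_walk (leqnn _) pk.
  have lk : last s (W1 ++ p22) = t by rewrite last_cat lW1 -lp2 Ep2 last_cat lp21.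
  rewrite lk in sq.
  have := mp0 _ sq.
  have e1 : plen w s W = plen w s W1 + plen w u W2 by rewrite EW plen_cat lW1.
  have e2 : plen w y p2 = plen w y p21 + plen w u p22 by rewrite Ep2 plen_cat lp21.
  have e3 : plen w s p0 = plen w s p1 + plen w y p2 by rewrite Ep0 plen_cat ly.
  have e4 : plen w s (W1 ++ p22) = plen w s W1 + plen w u p22 by rewrite plen_cat lW1.
  have := plen_gt0 pW2 W2n; have := plen_ge0 pp21. lra.
have sZ : spath g s t (W ++ p2).
  rewrite /spath cat_path pW lW pp2 last_cat lW lp2 eqxx !andTb.
  rewrite -cat_cons cat_uniq uW up2 andbT.
  by apply/hasPn => u up2'; apply/negP => /disj; apply.
have : inD g w s t e.
  exists (W ++ p2); split; last by rewrite pedges_cat mem_cat eW.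
  split => // q sq; have := mp0 _ sq.
  move: lenW; rewrite Ep0 !plen_cat lW ly; lra.
by [].
Qed.

Definition inT (e : {set V}) : Prop := e \in T.

Lemma tree_prefix A z : subpath g inT s (last s A) A -> z \in s :: A ->
  exists A1 A2, [/\ A = A1 ++ A2, last s A1 = z, subpath g inT s z A1 & path g z A2].
Proof.
move=> [/and3P[pA _ uA] eA] /pref [A1 [A2 [EA lA1]]].
exists A1, A2; split => //.
- move: pA uA; rewrite EA cat_path lA1 -cat_cons cat_uniq => /andP[pA1 _] /and3P[uA1 _ _].
  split; first by rewrite /spath pA1 lA1 eqxx uA1.
  by move=> e he; apply: eA; rewrite EA pedges_cat mem_cat he.
- by move: pA; rewrite EA cat_path lA1 => /andP[].
Qed.

Lemma wcontra A z q : subpath g inT s (last s A) A -> z \in s :: A ->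
  path g z q -> uniq (z :: q) -> q != [::] ->
  (forall e, e \in pedges z q -> forestR g w s t T e) ->
  (forall u, u \in q -> u \notin s :: A) -> VD (last z q) -> False.
Proof.
move=> sA zA pq uq qn eq qA [p0 [sp0 yp0]].
have [A1 [A2 [EA lA1 [/and3P[pA1 _ uA1] eA1] _]]] := tree_prefix sA zA.
have sW : subpath g inT s (last z q) (A1 ++ q).
  split.
    rewrite /spath cat_path pA1 lA1 pq last_cat lA1 eqxx !andTb.
    have uq2 : uniq q by case/andP: uq.
    rewrite -cat_cons cat_uniq uA1 uq2 andbT /=.
    apply/hasPn => u uq'; apply/negP => us; move: (qA u uq').
    by rewrite EA -cat_cons mem_cat us.
  move=> e; rewrite pedges_cat lA1 mem_cat => /orP[/eA1 //|/eq []] //.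
have shW := (proj2 HT) _ _ sW.
case: q qn pq uq eq qA sW shW yp0 => [|v q] // _ pq uq eq qA sW shW yp0.
have ev : [set z; v] \in pedges s (A1 ++ v :: q).
  by rewrite pedges_cat lA1 mem_cat pedges_cons mem_head orbT.
have := ext shW sp0 yp0 ev.
by have [] := eq [set z; v] (mem_head _ _).
Qed.

Lemma mlem A n z q : (size q <= n)%N -> subpath g inT s (last s A) A -> z \in s :: A ->
  path g z q -> uniq (z :: q) -> q != [::] ->
  (forall e, e \in pedges z q -> forestR g w s t T e) ->
  VD (last z q) -> last z q \in s :: A.
Proof.
elim: n z q => [|n IH] z q.
  by rewrite leqn0 => /nilP ->.
move=> sz sA zA pq uq qn eq vd.
case: (boolP (has (mem (s :: A)) q)) => [/hasP [u uq' uA]|/hasPn hq].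
  case/splitPr: uq' sz pq uq qn eq vd => q1 q2.
  rewrite size_cat /= cat_path last_cat /= => sz /andP[_ /andP[_ pq2]].
  move=> /andP[_]; rewrite cat_uniq => /and3P[_ _ uq2] _ eq vd.
  case: (eqVneq q2 [::]) => [-> //|q2n].
  apply: IH => //; first by lia.
  move=> e he; apply: eq; rewrite pedges_cat mem_cat pedges_cons in_cons he.
  by rewrite !orbT.
exfalso; apply: (wcontra sA zA pq uq qn eq) => // u /hq.
Qed.

Lemma ord A B x y : subpath g inT s x A -> subpath g inT s y B ->
  y \in s :: A -> x != y -> plen w s B < plen w s A.
Proof.
move=> sA sB yA xy.
have lA : last s A = x by move: sA => [/and3P[_ /eqP -> _] _].
rewrite -lA in sA.
have [A1 [A2 [EA lA1 sA1 pA2]]] := tree_prefix sA yA.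
have [_ mB] := (proj2 HT) _ _ sB.
have := mB _ (proj1 sA1).
have A2n : A2 != [::].
  by apply/eqP => E; move: lA; rewrite EA E cats0 lA1 => E2; rewrite E2 eqxx in xy.
have := plen_gt0 pA2 A2n.
have : plen w s A = plen w s A1 + plen w y A2 by rewrite EA plen_cat lA1.
lra.
Qed.

Lemma key x y q : VD x -> VD y -> subpath g (forestR g w s t T) x y q -> q = [::].
Proof.
move=> vx vy [/and3P[pq /eqP lq uq] eq].
case: (eqVneq q [::]) => // qn; exfalso.
have [[_ conn _] _] := HT.
have [A sA] := conn s x; have [B sB] := conn s y.
have lA : last s A = x by move: sA => [/and3P[_ /eqP -> _] _].
have lB : last s B = y by move: sB => [/and3P[_ /eqP -> _] _].
have xA : x \in s :: A by rewrite -lA mem_last.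
have yB : y \in s :: B by rewrite -lB mem_last.
have sA' : subpath g inT s (last s A) A by rewrite lA.
have sB' : subpath g inT s (last s B) B by rewrite lB.
have yA : y \in s :: A.
  rewrite -lq; apply: (mlem (leqnn _) sA' xA) => //; by rewrite lq.
have xy : x != y.
  case: q qn pq lq uq eq {yA} => [|v q] // _ pq lq /andP[xq _] _.
  apply/eqP => E; move: xq; rewrite E -lq /= mem_last. by [].
have [q' [pq' lq' rq' eq']] := rev_walk pq.
rewrite lq in pq' lq' rq' eq'.
have uq' : uniq (y :: q') by rewrite rq' rev_uniq.
have q'n : q' != [::] by apply/eqP => E; move: lq'; rewrite E /= => E2; rewrite E2 eqxx in xy.
have xB : x \in s :: B.
  rewrite -lq'; apply: (mlem (leqnn _) sB' yB) => //; last by rewrite lq'.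
  by move=> e /eq' /eq.
have := ord sA sB yA xy.
have yx : y != x by rewrite eq_sym.
have := ord sB sA xB yx.
lra.
Qed.

Definition Rw x y := exists q, [/\ path g x q, last x q = y &
  forall e, e \in pedges x q -> forestR g w s t T e].

Lemma Rw_refl x : Rw x x.
Proof. by exists [::]. Qed.

Lemma Rw_trans x y z : Rw x y -> Rw y z -> Rw x z.
Proof.
move=> [q1 [p1 l1 e1]] [q2 [p2 l2 e2]]; exists (q1 ++ q2); split.
- by rewrite cat_path p1 l1 p2.
- by rewrite last_cat l1.
- by move=> e; rewrite pedges_cat mem_cat l1 => /orP[/e1|/e2].
Qed.

Lemma key_rw x y : VD x -> VD y -> Rw x y -> x = y.
Proof.
move=> vx vy [q [pq lq eq]].
have [q' [sq _ eq' _]] := shorten_walk (leqnn _) pq.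
rewrite lq in sq.
have := key vx vy (conj sq (fun e h => eq e (eq' e h))).
by move=> E; move: sq; rewrite E /spath /= => /andP[/eqP].
Qed.

Lemma inD_VD u v : inD g w s t [set u; v] -> VD u /\ VD v.
Proof.
move=> [p0 [sp ep]].
have [a [b [_ E [ap bp]]]] := pedgesP ep.
have bp' : b \in s :: p0 by rewrite in_cons bp orbT.
have hu : u \in [set a; b] by rewrite -E set21.
have hv : v \in [set a; b] by rewrite -E set22.
split; [move/set2P: hu => [->|->] | move/set2P: hv => [->|->]]; by exists p0.
Qed.

Lemma walkL q a c : path g a q -> uniq (a :: q) -> VD (last a q) -> VD c ->
  c \notin q -> Rw c a ->
  (forall u v, (u, v) \in zip (a :: q) q -> inD g w s t [set u; v] \/ Rw u v) ->
  (c != a \/ exists e, e \in pedges a q /\ ~ inD g w s t e) -> False.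
Proof.
elim: q a c => [|x q IH] a c /=.
  move=> _ _ va vc _ rca _ [ca|[e []]] //.
  by have := key_rw vc va rca; move/eqP: ca.
move=> /andP[gax pq] /andP[axq uq] vl vc cq rca HE D.
have HE' : forall u v, (u, v) \in zip (x :: q) q -> inD g w s t [set u; v] \/ Rw u v.
  by move=> u v h; apply: HE; rewrite in_cons h orbT.
have cxq : c \notin q by move: cq; rewrite in_cons negb_or => /andP[].
have cx : c != x by move: cq; rewrite in_cons negb_or => /andP[].
case: (HE a x (mem_head _ _)) => [dax|rax].
  have [va vx] := inD_VD dax.
  case: (eqVneq c a) => [Eca|ca]; last first.
    by move: (key_rw vc va rca) => E; rewrite E eqxx in ca.
  apply: (IH x x pq uq vl vx _ (Rw_refl x) HE'); first by case/andP: uq.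
  right; case: D => [|[e [he ne]]]; first by rewrite Eca eqxx.
  move: he; rewrite pedges_cons in_cons => /orP[/eqP E|he]; first by rewrite E in ne.
  by exists e.
apply: (IH x c pq uq vl vc cxq (Rw_trans rca rax) HE'); by left.
Qed.

Lemma mainL p : outward_path g w s t p ->
  (forall e, e \in pedges s p -> ~ Etilde g w s t T e) -> False.
Proof.
move=> [sp [e0 [e0p e0n]]] HE.
have [p0 sp0] := exists_shortest sp.
have vs : VD s by exists p0; rewrite mem_head.
have vt : VD t.
  exists p0; split => //; move: sp0 => [/and3P[_ /eqP <- _] _]; exact: mem_last.
move: sp => /and3P[pp /eqP lp up].
apply: (walkL pp up _ vs _ (Rw_refl s)).
- by rewrite lp.
- by move: up => /andP[].
- move=> u v uv.
  have guv := path_zip pp uv.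
  have euv := pedges_mem uv.
  case: (classic (inD g w s t [set u; v])) => [|nd]; first by left.
  right.
  case: (boolP ([set u; v] \in T)) => [inT'|ninT].
    exists [:: v]; split => //=; first by rewrite guv.
    by move=> e; rewrite pedges_cons in_cons pedges_nil in_nil orbF => /eqP ->.
  case: (classic (R_connected g w s t T u v)) => [[q [/and3P[pq /eqP lq _] eq]]|nc].
    by exists q.
  by exfalso; apply: (HE _ euv); exists u, v; split.
- by right; exists e0.
Qed.

End Work.

Theorem lemma12 (R : realDomainType) (V : finType) (g : rel V)
  (w : V -> V -> R) (s t : V) (T : {set {set V}}) (p : seq V) :
  symmetric g -> irreflexive g ->
  (forall x y, w x y = w y x) ->
  (forall x y, g x y -> 0 < w x y) ->
  connected_graph g ->
  sp_tree g w s T ->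
  optimal_outward_path g w s t p ->
  exists2 e, e \in pedges s p & Etilde g w s t T e.
Proof.
move=> gsym _ _ wpos _ HT [op _].
apply: NNPP => H.
apply: (mainL gsym wpos HT op) => e ep he.
by apply: H; exists e.
Qed.
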